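(* Let $G\neq K_4$ be a connected, claw-free cubic graph all of whose units are triangle-units. Then there exists an independent set in $G$ that contains a vertex from every triangle of $G$.
   Context: A graph is claw-free if it has no induced subgraph isomorphic to $K_{1,3}$; it is cubic if every vertex has degree $3$. A diamond is an induced subgraph isomorphic to $K_4$ minus one edge. For a connected, claw-free, cubic graph $G\neq K_4$, the vertex set $V(G)$ can be uniquely partitioned into sets each of which induces a triangle or a diamond in $G$; the parts are called units, a triangle-unit being a part inducing a triangle and a diamond-unit a part inducing a diamond. *)

(* Defs.v *)
From mathcomp Require Import all_boot.
Set Implicit Arguments. Unset Strict Implicit. Unset Printing Implicit Defensive.

Section Graphs.
Variables (V : finType) (e : rel V).

Definition simple_graph : Prop := symmetric e /\ irreflexive e.

Definition cubic : Prop := forall v : V, #|[set w | e v w]| = 3.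

Definition connected_graph : Prop := forall x y : V, connect e x y.

Definition claw_free : Prop :=
  ~ exists v a b c : V,
      [/\ e v a, e v b, e v c & [/\ a != b, a != c & b != c]] /\
      [/\ ~~ e a b, ~~ e a c & ~~ e b c].

Definition is_K4 : Prop :=
  #|V| = 4 /\ forall x y : V, x != y -> e x y.

(* number of (unordered) edges inside U, counted as ordered pairs *)
Definition inner_arcs (U : {set V}) : nat :=
  #|[set p : V * V | [&& p.1 \in U, p.2 \in U & e p.1 p.2]]|.

Definition induces_triangle (U : {set V}) : Prop :=
  #|U| = 3 /\ {in U &, forall x y, x != y -> e x y}.

(* U induces a diamond (K_4 minus one edge): 4 vertices, exactly 5 edges *)
Definition induces_diamond (U : {set V}) : Prop :=
  #|U| = 4 /\ inner_arcs U = 10.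

Definition unit_partition (P : {set {set V}}) : Prop :=
  partition P [set: V] /\
  forall U, U \in P -> induces_triangle U \/ induces_diamond U.

Definition is_triangle (a b c : V) : Prop := [/\ e a b, e a c & e b c].

Definition independent (S : {set V}) : Prop :=
  {in S &, forall x y, ~~ e x y}.

End Graphs.

(* Main.v *)
Require Import Defs.
From mathcomp Require Import all_boot.
From Stdlib Require Import Classical.
Set Implicit Arguments. Unset Strict Implicit. Unset Printing Implicit Defensive.

Definition setup (V : finType) (e : rel V) (P : {set {set V}}) : Prop :=
  [/\ symmetric e, irreflexive e, cubic e, partition P [set: V] &
      forall U, U \in P -> induces_triangle e U].

Definition E (V : finType) (e : rel V) (P : {set {set V}}) x y :=
  e x y && (y \notin pblock P x).

Lemma pb_self V e P (S : @setup V e P) x : x \in pblock P x.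
Proof.
case: S => _ _ _ /and3P[/eqP cP _ _] _.
by rewrite mem_pblock cP inE.
Qed.

Lemma pb_eq V e P (S : @setup V e P) x y : y \in pblock P x -> pblock P y = pblock P x.
Proof.
case: S => _ _ _ /and3P[_ tP _] _ h.
exact: same_pblock.
Qed.

Lemma pb_sym V e P (S : @setup V e P) x y : y \in pblock P x -> x \in pblock P y.
Proof. by move=> h; rewrite (pb_eq S h) (pb_self S). Qed.

Lemma pb_tri V e P (S : @setup V e P) x : induces_triangle e (pblock P x).
Proof.
case: (S) => _ _ _ /and3P[/eqP cP _ _] hT; apply: hT.
by apply: pblock_mem; rewrite cP inE.
Qed.

Lemma pb_adj V e P (S : @setup V e P) x y : y \in pblock P x -> x != y -> e x y.
Proof.
move=> hy hxy; case: (pb_tri S x) => _ h; apply: h => //; exact: (pb_self S).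
Qed.

Lemma E_sym V e P (S : @setup V e P) x y : E e P x y -> E e P y x.
Proof.
case: (S) => se _ _ _ _.
rewrite /E => /andP[exy nb]; rewrite se exy /=.
by apply: contra nb => /(pb_sym S).
Qed.

Lemma E_ex V e P (S : @setup V e P) x : exists z, forall y, E e P x y = (y == z).
Proof.
case: (S) => se ie cu _ _.
set N := [set w | e x w]; set B := pblock P x.
have hNB : N :&: B = B :\ x.
  apply/setP => w; rewrite !inE.
  case: (eqVneq w x) => [->|nw] /=; first by rewrite ie.
  case hw: (w \in B); last by rewrite andbF.
  by rewrite andbT; apply: (pb_adj S) => //; rewrite eq_sym.
have cB : #|B| = 3 by case: (pb_tri S x).
have c2 : #|B :\ x| = 2.
  by move: cB; rewrite (cardsD1 x B) (pb_self S) add1n => [[]].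
have : #|N :\: B| = 1 by rewrite cardsD hNB c2 (cu x).
move/eqP/cards1P => [z hz]; exists z => y.
have := congr1 (fun s : {set V} => y \in s) hz; by rewrite !inE /E andbC.
Qed.

Lemma E_fun V e P (S : @setup V e P) x y z : E e P x y -> E e P x z -> y = z.
Proof.
by case: (E_ex S x) => w hw; rewrite !hw => /eqP -> /eqP ->.
Qed.

Definition closedW (V : finType) (P : {set {set V}}) (W : {set V}) :=
  forall x y, y \in pblock P x -> x \in W -> y \in W.

Definition Gen (V : finType) (e : rel V) (P : {set {set V}}) (B : V -> Prop) (W A : {set V}) :=
  [/\ closedW P W, A \subset W,
      (forall z, z \in W -> exists2 a, a \in A & a \in pblock P z),
      (forall a b, a \in A -> E e P a b -> b \in W \/ B b) &
      (forall a b, a \in A -> E e P a b -> b \notin A)].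

Lemma add_unit V e P (S : @setup V e P) B W A x y :
  Gen e P B W A -> x \in W -> E e P x y -> y \notin W -> ~ B y ->
  Gen e P B (W :|: pblock P y) (y |: A).
Proof.
move=> [cW sAW hit ext ind] xW Exy yW nBy.
have Eyx := E_sym S Exy.
have xA : x \notin A.
  apply/negP => xA; case: (ext _ _ xA Exy) => //; by rewrite (negbTE yW).
have xy : x != y by apply: contraNneq yW => <-.
split.
- move=> a b hb; rewrite !inE => /orP[aW|ay].
    by rewrite (cW _ _ hb aW).
  by rewrite (pb_eq S ay) in hb; rewrite hb orbT.
- apply/subsetP => a; rewrite !inE => /orP[/eqP->|aA].
    by rewrite (pb_self S) orbT.
  by rewrite (subsetP sAW _ aA).
- move=> z; rewrite inE => /orP[zW|zy].
    by case: (hit _ zW) => a aA az; exists a => //; rewrite inE aA orbT.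
  by exists y; rewrite ?inE ?eqxx // (pb_sym S zy).
- move=> a b; rewrite in_setU1 => /orP[/eqP->|aA] Eab.
    by left; rewrite (E_fun S Eab Eyx) inE xW.
  by case: (ext _ _ aA Eab) => [bW|]; [left; rewrite inE bW | right].
- move=> a b; rewrite in_setU1 => /orP[/eqP->|aA] Eab.
    by rewrite (E_fun S Eab Eyx) in_setU1 negb_or xA andbT; apply: contra xy => /eqP->.
  rewrite in_setU1 negb_or (ind _ _ aA Eab) andbT.
  apply/eqP => eby; rewrite eby in Eab.
  have := E_fun S (E_sym S Eab) Eyx => eax.
  by move: aA; rewrite eax (negbTE xA).
Qed.

Lemma tri_unit V e P (S : @setup V e P) a b c :
  e a b -> e a c -> e b c -> b \in pblock P a.
Proof.
case: (S) => se ie _ _ _ eab eac ebc.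
apply/negPn/negP => nb.
have Eab : E e P a b by rewrite /E eab nb.
case hc: (c \in pblock P a).
  have Ecb : E e P c b.
    by rewrite /E -se ebc /= (pb_eq S hc).
  have := E_fun S (E_sym S Eab) (E_sym S Ecb) => eac'.
  by move: eac; rewrite eac' ie.
have Eac : E e P a c by rewrite /E eac hc.
have := E_fun S Eab Eac => ebc'.
by move: ebc; rewrite ebc' ie.
Qed.

Lemma path_stays (V : finType) (e : rel V) (W : {set V}) :
  (forall a b, a \in W -> e a b -> b \in W) ->
  forall p x, x \in W -> path e x p -> last x p \in W.
Proof.
move=> h; elim=> [|y p IH] x xW //= /andP[exy pp].
exact: IH (h _ _ xW exy) pp.
Qed.

Definition Fls (V : Type) := fun _ : V => False.

Lemma Gen_weaken (V : finType) (e : rel V) P (B B' : V -> Prop) W A :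
  Gen e P B W A -> (forall b, B b -> b \in W) -> Gen e P B' W A.
Proof.
move=> [cW sAW hit ext ind] hB; split => // a b aA Eab.
by case: (ext _ _ aA Eab) => [|/hB]; left.
Qed.

Lemma grow_step V e P (S : @setup V e P) (conn : connected_graph e) W A :
  Gen e P (@Fls V) W A -> W != set0 -> W != [set: V] ->
  exists W' A', [/\ Gen e P (@Fls V) W' A', W' != set0 & #|~: W'| < #|~: W|].
Proof.
move=> G nW nT.
case/set0Pn: nW => w0 w0W.
have [y0 y0W] : exists y0, y0 \notin W.
  apply: NNPP => h; move/negP: nT; apply; apply/eqP/setP => z.
  rewrite inE; apply: NNPP => hz; apply: h; exists z; exact/negP.
have [x [y [xW yW exy]]] : exists x y, [/\ x \in W, y \notin W & e x y].
  apply: NNPP => h.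
  have hc : forall a b, a \in W -> e a b -> b \in W.
    move=> a b aW eab; apply: NNPP => bW; apply: h; exists a, b; split => //.
    exact/negP.
  case/connectP: (conn w0 y0) => p pp ey.
  by move: (path_stays hc w0W pp); rewrite -ey (negbTE y0W).
have Exy : E e P x y.
  rewrite /E exy /=; apply: contra yW => hy.
  by case: G => cW _ _ _ _; apply: (cW x).
exists (W :|: pblock P y), (y |: A); split.
- exact: (add_unit S G xW Exy yW).
- by apply/set0Pn; exists y; rewrite inE (pb_self S) orbT.
- apply: proper_card; apply/properP; split.
    by apply/subsetP => z; rewrite !inE negb_or => /andP[].
  by exists y; rewrite !inE ?yW // (pb_self S) orbT.
Qed.

Lemma grow V e P (S : @setup V e P) (conn : connected_graph e) k :
  forall W A, Gen e P (@Fls V) W A -> W != set0 -> #|~: W| <= k ->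
  exists A', Gen e P (@Fls V) [set: V] A'.
Proof.
elim: k => [|k IH] W A G nW hk.
  have hC : ~: W = set0 by apply/eqP; rewrite -cards_eq0 -leqn0.
  have hW : W = [set: V] by rewrite -[W]setCK hC setC0.
  by rewrite -hW; exists A.
case: (eqVneq W [set: V]) => [eW|nT]; first by exists A; rewrite -eW.
case: (grow_step S conn G nW nT) => W' [A' [G' nW' lt]].
by apply: (IH W' A') => //; rewrite -ltnS (leq_trans lt hk).
Qed.

Definition Cl (V : finType) (e : rel V) (P : {set {set V}}) r (W : {set V}) :=
  [/\ closedW P W, r \in W,
      (forall x y, x \in W -> x != r -> E e P x y -> y \in W) &
      (forall y, E e P r y -> y \notin W)].

Definition GoodNE (V : finType) (e : rel V) (P : {set {set V}}) :=
  exists W A, Gen e P (@Fls V) W A /\ W != set0.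

Lemma claim_step V e P (S : @setup V e P) r u (Eru : E e P r u) k :
  forall W A, Gen e P (fun b => b = u) W A -> u \notin W -> r \in W ->
  #|~: W| <= k -> GoodNE e P \/ exists W, Cl e P r W.
Proof.
elim: k => [|k IH] W A G uW rW hk.
  have hC : ~: W = set0 by apply/eqP; rewrite -cards_eq0 -leqn0.
  have hW : W = [set: V] by rewrite -[W]setCK hC setC0.
  by move: uW; rewrite hW inE.
case: (classic (exists x y, [/\ x \in W, x != r, E e P x y & y \notin W])).
- move=> [x [y [xW xr Exy yW]]].
  have yu : ~ y = u.
    move=> eyu; rewrite eyu in Exy.
    by move: xr; rewrite (E_fun S (E_sym S Exy) (E_sym S Eru)) eqxx.
  have G' := add_unit S G xW Exy yW yu.
  case hyu: (y \in pblock P u).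
    left; exists (W :|: pblock P y), (y |: A); split.
      apply: Gen_weaken G' _ => b ->; by rewrite inE (pb_eq S hyu) (pb_self S) orbT.
    by apply/set0Pn; exists y; rewrite inE (pb_self S) orbT.
  apply: (IH _ _ G').
  - rewrite inE negb_or uW /=; apply/negP => /(pb_sym S); by rewrite hyu.
  - by rewrite inE rW.
  - rewrite -ltnS; apply: leq_trans hk; apply: proper_card; apply/properP; split.
      by apply/subsetP => z; rewrite !inE negb_or => /andP[].
    by exists y; rewrite !inE ?yW // (pb_self S) orbT.
- move=> h; right; exists W; case: G => cW _ _ _ _; split => //.
    move=> x y xW xr Exy; apply: NNPP => yW; apply: h; exists x, y; split => //.
    exact/negP.
  by move=> y Ery; rewrite (E_fun S Ery Eru).
Qed.

Lemma claim V e P (S : @setup V e P) r : GoodNE e P \/ exists W, Cl e P r W.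
Proof.
case: (E_ex S r) => u hu.
have Eru : E e P r u by rewrite hu.
apply: (claim_step S Eru (k := #|~: pblock P r|) (W := pblock P r) (A := [set r])) => //.
- split.
  + by move=> x y hy hx; rewrite -(pb_eq S hx).
  + by rewrite sub1set (pb_self S).
  + move=> z zr; exists r; rewrite ?inE //; exact: (pb_sym S).
  + by move=> a b; rewrite inE => /eqP-> Erb; right; apply: (E_fun S Erb Eru).
  + move=> a b; rewrite inE => /eqP-> Erb; rewrite inE; apply/eqP => ebr.
    by move: Erb; rewrite ebr /E (pb_self S) andbF.
- by move: Eru; rewrite /E => /andP[].
- exact: (pb_self S).
Qed.

Lemma no_cl V e P (S : @setup V e P) (NG : ~ GoodNE e P) n :
  forall r (W : {set V}), #|W| <= n -> Cl e P r W -> False.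
Proof.
elim: n => [|n IH] r W hn [cW rW hx hr].
  by move: hn; rewrite leqn0 cards_eq0 => /eqP W0; move: rW; rewrite W0 inE.
have [s [sR sr]] : exists s, s \in pblock P r /\ s != r.
  case: (pb_tri S r) => c3 _.
  have : 0 < #|pblock P r :\ r|.
    by move: c3; rewrite (cardsD1 r) (pb_self S) add1n => [[->]].
  by case/card_gt0P => s; rewrite !inE => /andP[sr sR]; exists s.
have sW : s \in W by apply: (cW r).
case: (E_ex S s) => r' hsr'.
have Esr' : E e P s r' by rewrite hsr'.
have r'W : r' \in W by apply: (hx s).
case: (claim S r') => [//|[W' [cW' r'W' hx' hr']]].
have sW' : s \notin W' by apply: hr'; exact: E_sym.
have rW' : r \notin W'.
  by apply: contra sW' => rW'; apply: (cW' r).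
apply: (IH r' (W' :&: W)).
- rewrite -ltnS; apply: leq_trans hn; apply: proper_card; apply/properP; split.
    by apply/subsetP => z; rewrite inE => /andP[].
  by exists r; rewrite // inE (negbTE rW').
- split.
  + by move=> x y hy; rewrite !inE => /andP[/(cW' _ _ hy) -> /(cW _ _ hy) ->].
  + by rewrite inE r'W' r'W.
  + move=> x y; rewrite inE => /andP[xW' xW] xr Exy; rewrite inE (hx' _ _ xW' xr Exy).
    apply: (hx _ _ xW _ Exy); apply: contraNneq rW' => <-; exact: xW'.
  + by move=> y Ery; rewrite inE (negbTE (hr' _ Ery)).
Qed.

Theorem lemma3p9 (V : finType) (e : rel V) :
  simple_graph e -> connected_graph e -> claw_free e -> cubic e ->
  ~ is_K4 e ->
  (exists P : {set {set V}},
      unit_partition e P /\ forall U, U \in P -> induces_triangle e U) ->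
  exists S : {set V}, independent e S /\
    forall a b c : V, is_triangle e a b c -> [|| a \in S, b \in S | c \in S].
Proof.
move=> [se ie] conn _ cu _ [P [[part _] hU]].
have S : setup e P by rewrite /setup; split.
case: (pickP (fun _ : V => true)) => [r _|none]; last first.
  exists set0; split; first by move=> x y; rewrite inE.
  by move=> a; move: (none a).
have GN : GoodNE e P.
  apply: NNPP => NG; case: (claim S r) => // [[W hW]].
  exact: (no_cl S NG (leqnn #|W|) hW).
case: GN => W [A [G nW]].
case: (grow S conn G nW (leqnn _)) => A0 [cW _ hit _ ind].
pose Ss := [set x | (x \in A0) &&
   [forall y, ((y \in A0) && (y \in pblock P x)) ==> (enum_rank x <= enum_rank y)]].
exists Ss; split.
- move=> x y; rewrite !inE => /andP[xA /forallP hxm] /andP[yA /forallP hym].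
  apply/negP => exy.
  case hy: (y \in pblock P x).
    have h1 := hxm y; rewrite yA hy /= in h1.
    have h2 := hym x; rewrite xA (pb_sym S hy) /= in h2.
    have : enum_rank x = enum_rank y by apply/val_inj/eqP; rewrite eqn_leq h1 h2.
    move/enum_rank_inj => exy'; by move: exy; rewrite exy' ie.
  have Exy : E e P x y by rewrite /E exy hy.
  by move: (ind _ _ xA Exy); rewrite yA.
- move=> a b c [eab eac ebc].
  have bP : b \in pblock P a by apply: (tri_unit S eab eac ebc).
  have cP : c \in pblock P a by apply: (tri_unit S eac eab); rewrite se.
  have [z zA za] := hit a (in_setT a).
  case: (@arg_minnP _ z (fun i => (i \in A0) && (i \in pblock P a)) (fun i => enum_rank i));
    first by rewrite zA za.
  move=> m /andP[mA ma] hmin.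
  have mS : m \in Ss.
    rewrite inE mA /=; apply/forallP => y; apply/implyP => /andP[yA ym].
    apply: hmin; rewrite yA /=; by rewrite -(pb_eq S ma).
  have nab : a != b by apply: contraTneq eab => ->; rewrite ie.
  have nac : a != c by apply: contraTneq eac => ->; rewrite ie.
  have nbc : b != c by apply: contraTneq ebc => ->; rewrite ie.
  have XP : [set a; b; c] = pblock P a.
    apply/eqP; rewrite eqEcard; apply/andP; split.
      apply/subsetP => x; rewrite !inE => /orP[/orP[]|] /eqP->; by rewrite ?(pb_self S).
    case: (pb_tri S a) => -> _.
    by rewrite -setUA cardsU1 cards2 !inE negb_or nab nac nbc.
  have : (m == a) || (m == b) || (m == c).
    have hm : m \in [set a; b; c] by rewrite XP.
    by move: hm; rewrite !inE.
  case/orP => [/orP[]|] /eqP em; by rewrite -em mS ?orbT.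
Qed.
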